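(* Let $G$ be a compact group, $H$ a normal subgroup of $G$, $K=G/H$ with quotient map $g\mapsto[g]$. Let $(l_n)_{n\in\mathbb{N}}$ be continuous length functions on $G$ converging uniformly on $G$ to a function $\widetilde{l_\infty}$ with $\widetilde{l_\infty}(g)=0$ for $g\in H$ and $\widetilde{l_\infty}(g)>0$ for $g\notin H$. Then there exists a continuous length function $l_\infty$ on $K$ such that $l_n(g)\to l_\infty([g])$ as $n\to\infty$ for all $g\in G$.
   Context: A length function on a group with unit $e$: $l\ge0$, $l(g)=0$ iff $g=e$, $l(g^{-1})=l(g)$, $l(gh)\le l(g)+l(h)$. *)

(* Defs.v *)
From HB Require Import structures.
From mathcomp Require Import all_boot all_order all_algebra generic_quotient.
From mathcomp Require Import all_classical all_reals all_analysis.
Set Implicit Arguments. Unset Strict Implicit. Unset Printing Implicit Defensive.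
Import Order.TTheory GRing.Theory Num.Theory.
Local Open Scope classical_set_scope.
Local Open Scope ring_scope.
Local Open Scope quotient_scope.

Record topGroup (T : topologicalType) := TopGroup {
  gmul : T -> T -> T;
  ginv : T -> T;
  gone : T;
  gmulA : forall x y z, gmul x (gmul y z) = gmul (gmul x y) z;
  gmul1 : forall x, gmul gone x = x;
  gmulg1 : forall x, gmul x gone = x;
  gmulV : forall x, gmul (ginv x) x = gone;
  gmulgV : forall x, gmul x (ginv x) = gone;
  gmul_cont : continuous (fun p : T * T => gmul p.1 p.2);
  ginv_cont : continuous ginv }.

Record normalSubgroup (T : topologicalType) (G : topGroup T) := NormalSubgroup {
  nsg_set : set T;
  nsg_one : nsg_set (gone G);
  nsg_mul : forall x y, nsg_set x -> nsg_set y -> nsg_set (gmul G x y);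
  nsg_inv : forall x, nsg_set x -> nsg_set (ginv G x);
  nsg_conj : forall g x, nsg_set x -> nsg_set (gmul G (gmul G (ginv G g) x) g) }.

Definition is_length_function (T : Type) (R : realType)
    (mul : T -> T -> T) (inv : T -> T) (one : T) (l : T -> R) :=
  [/\ forall g, 0 <= l g,
      forall g, l g = 0 <-> g = one,
      forall g, l (inv g) = l g &
      forall g h, l (mul g h) <= l g + l h].

Section Quot.
Context (T : topologicalType) (G : topGroup T) (H : normalSubgroup G).
Local Notation "x * y" := (gmul G x y).
Local Notation "x ^-1" := (ginv G x).

(* x ~ y iff x^-1 y in H, i.e. x H = y H *)
Definition cosrel (x y : T) : bool := `[< nsg_set H (x^-1 * y) >].

Lemma inv_uniq (a h : T) : a * h = gone G -> a = h^-1.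
Proof.
move=> e. by rewrite -(gmulg1 G a) -(gmulgV G h) gmulA e gmul1.
Qed.

Lemma cosrel_refl : reflexive cosrel.
Proof. by move=> x; apply/asboolP; rewrite gmulV; exact: nsg_one. Qed.

Lemma cosrel_sym : symmetric cosrel.
Proof.
suff S : forall x y, cosrel x y -> cosrel y x.
  by move=> x y; apply/idP/idP; apply: S.
move=> x y /asboolP hxy; apply/asboolP.
have -> : y^-1 * x = (x^-1 * y)^-1.
  apply: inv_uniq.
  by rewrite gmulA -(gmulA G _ x) gmulgV gmulg1 gmulV.
exact: nsg_inv.
Qed.

Lemma cosrel_trans : transitive cosrel.
Proof.
move=> y x z /asboolP hxy /asboolP hyz; apply/asboolP.
have -> : x^-1 * z = (x^-1 * y) * (y^-1 * z).
  by rewrite gmulA -(gmulA G _ y) gmulgV gmulg1.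
exact: nsg_mul.
Qed.

Definition cosEquiv : equiv_rel T := EquivRel cosrel cosrel_refl cosrel_sym cosrel_trans.

Definition quotGroup := quotient_topology {eq_quot cosEquiv}.

Definition qmap (g : T) : quotGroup := \pi_quotGroup g.
Definition qmul (a b : quotGroup) : quotGroup := qmap (repr a * repr b).
Definition qinv (a : quotGroup) : quotGroup := qmap ((repr a)^-1).
Definition qone : quotGroup := qmap (gone G).
End Quot.

(* Main.v *)
Require Import Defs.
From HB Require Import structures.
From mathcomp Require Import all_boot all_order all_algebra generic_quotient.
From mathcomp Require Import all_classical all_reals all_analysis.
From mathcomp Require Import lra.
Import Order.TTheory GRing.Theory Num.Theory numFieldNormedType.Exports.
Local Open Scope classical_set_scope.
Local Open Scope ring_scope.
Local Open Scope quotient_scope.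

Theorem mainTheorem16 (R : realType) (T : topologicalType) (G : topGroup T)
  (H : normalSubgroup G)
  (hcompact : compact [set: T])
  (l : nat -> T -> R) (ltilde : T -> R)
  (hl_cont : forall n, continuous (l n))
  (hl_len : forall n, is_length_function (gmul G) (ginv G) (gone G) (l n))
  (hunif : forall eps : R, 0 < eps ->
     exists N : nat, forall n, (N <= n)%N -> forall g : T, `|l n g - ltilde g| < eps)
  (hzero : forall g, nsg_set H g -> ltilde g = 0)
  (hpos : forall g, ~ nsg_set H g -> 0 < ltilde g) :
  exists linf : quotGroup H -> R,
    [/\ continuous linf,
        is_length_function (@qmul _ _ H) (@qinv _ _ H) (qone H) linf &
        forall g : T, l n g @[n --> \oo] --> linf (qmap H g)].
Proof.
have hN : forall eps : R, 0 < eps -> exists N : nat, forall g, 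
    ltilde g - eps < l N g /\ l N g < ltilde g + eps.
  move=> e e0; have [N hNn] := hunif e e0; exists N => g.
  have := hNn N (leqnn N) g; rewrite ltr_norml => /andP[h1 h2].
  split; lra.
have ge0 : forall g, 0 <= ltilde g.
  move=> g; case: (pselect (nsg_set H g)) => hg.
    by rewrite hzero.
  exact/ltW/hpos.
have sub : forall g h, ltilde (gmul G g h) <= ltilde g + ltilde h.
  move=> g h; apply/ler_addgt0Pr => e e0.
  have e3 : 0 < e / 3 by rewrite divr_gt0.
  have [N hn] := hN _ e3.
  have [_ _ _ hsub] := hl_len N.
  have := hsub g h; have := hn g; have := hn h; have := hn (gmul G g h).
  lra.
have sym : forall g, ltilde (ginv G g) = ltilde g.
  have S : forall g, ltilde (ginv G g) <= ltilde g.
    move=> g; apply/ler_addgt0Pr => e e0.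
    have e3 : 0 < e / 3 by rewrite divr_gt0.
    have [N hn] := hN _ e3.
    have [_ _ hinv _] := hl_len N.
    have := hinv g; have := hn g; have := hn (ginv G g).
    lra.
  move=> g; apply/eqP; rewrite eq_le S /=.
  have := S (ginv G g).
  have -> : ginv G (ginv G g) = g.
    by rewrite -(gmul1 G (ginv G (ginv G g))) -(gmulgV G g) -gmulA gmulgV gmulg1.
  by [].
have const : forall x y, cosrel H x y -> ltilde x = ltilde y.
  move=> x y /asboolP hxy.
  have hy : y = gmul G x (gmul G (ginv G x) y).
    by rewrite gmulA gmulgV gmul1.
  have hx : x = gmul G y (ginv G (gmul G (ginv G x) y)).
    have -> : ginv G (gmul G (ginv G x) y) = gmul G (ginv G y) x.
      symmetry; apply: inv_uniq.
      by rewrite gmulA -(gmulA G _ x) gmulgV gmulg1 gmulV.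
    by rewrite gmulA gmulgV gmul1.
  apply/eqP; rewrite eq_le; apply/andP; split.
    rewrite {1}hx; apply: le_trans (sub _ _) _.
    by rewrite sym (hzero _ hxy) addr0.
  rewrite {1}hy. apply: le_trans (sub _ _) _.
  by rewrite (hzero _ hxy) addr0.
have Lc : forall g, ltilde (repr (qmap H g)) = ltilde g.
  move=> g; apply: const.
  have : \pi_(quotGroup H) (repr (qmap H g)) = qmap H g by rewrite reprK.
  by move/eqmodP.
exists (fun q => ltilde (repr q)); split.
- apply/quotient_continuous.
  have -> : ((fun q : quotGroup H => ltilde (repr q)) \o \pi_(quotGroup H)) = ltilde.
    by apply/funext => g /=; exact: Lc.
  move=> x; apply/cvgrPdist_lt => e e0.
  have e3 : 0 < e / 3 by rewrite divr_gt0.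
  have [N hn] := hN _ e3.
  have := hl_cont N x => /cvgrPdist_lt /(_ _ e3); apply: filterS => t.
  rewrite !ltr_norml => /andP[h1 h2].
  have := hn x; have := hn t => ? ?.
  apply/andP; split; lra.
- split.
  + by move=> q.
  + move=> q; split.
      move=> h0.
      have hq : nsg_set H (repr q).
        case: (pselect (nsg_set H (repr q))) => // hn.
        by have := hpos _ hn; rewrite h0 ltxx.
      rewrite -[q]reprK /qone /qmap; apply/eqmodP.
      apply/asboolP; rewrite gmulg1.
      exact: nsg_inv.
    move=> ->; rewrite /qone Lc hzero //; exact: nsg_one.
  + by move=> q; rewrite /qinv Lc sym.
  + by move=> p q; rewrite /qmul Lc sub.
- move=> g; rewrite Lc; apply/cvgrPdist_lt => e e0.
  have [N hn] := hunif e e0.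
  exists N => // n /= hNn.
  by rewrite distrC; apply: hn.
Qed.
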